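(* Let $f:\{0,1\}^n\to\{0,1\}^m$ be a Boolean function which is either constant or balanced. For each $i=0,\dots,m-1$ run $\mathrm{GPK}(\mathbf{e}_i)$ with output $\delta_i\in\{0,1\}^n$, and define $\boldsymbol\lambda=\lambda_{m-1}\dots\lambda_0\in\{0,1\}^m$ by $\lambda_i=0$ if $\delta_i=\mathbf{0}$ and $\lambda_i=1$ otherwise. Then with certainty: if $f$ is constant, $\boldsymbol\lambda=\mathbf{0}$; if $f$ is balanced with its two values $\mathbf{f}_1\neq\mathbf{f}_2$, then $\boldsymbol\lambda=\mathbf{f}_1\oplus\mathbf{f}_2$. In particular, the set of values of $f$ equals $\{f(\mathbf{0}),\,f(\mathbf{0})\oplus\boldsymbol\lambda\}$, so the possible values of $f$ are determined by these runs together with one classical evaluation of $f(\mathbf{0})$.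
   Context: A function $f:\{0,1\}^n\to\{0,1\}^m$ is constant if $f(\mathbf{x})$ is the same for all $\mathbf{x}$, and balanced if it takes exactly two distinct values, each on exactly half of the inputs. Bits are indexed from the right starting at $0$ and $\mathbf{e}_i=0^{m-1-i}\,1\,0^{i}\in\{0,1\}^m$. For strings $\mathbf{y},\mathbf{z}$ of equal length, $\mathbf{y}\oplus\mathbf{z}$ is bitwise XOR and $\mathbf{y}\cdot\mathbf{z}=\bigoplus_j y_jz_j$. $\mathbf{U}_f$ is the unitary with $\mathbf{U}_f(\ket{\mathbf{x}}_n\otimes\ket{\mathbf{z}}_m)=\ket{\mathbf{x}}_n\otimes\ket{\mathbf{z}\oplus f(\mathbf{x})}_m$; $\mathbf{H}_k=\mathbf{H}^{\otimes k}$ with $\mathbf{H}$ the one-qubit Hadamard gate. The algorithm $\mathrm{GPK}(\mathbf{y})$ for $\mathbf{y}\in\{0,1\}^m$: start in $\ket{\mathbf{0}}_n\otimes\ket{\mathbf{0}}_m$; apply Pauli $\mathbf{X}$ gates to get $\ket{\mathbf{0}}_n\otimes\ket{\mathbf{y}}_m$; apply $\mathbf{H}_{n+m}$; apply $\mathbf{U}_f$; apply $\mathbf{H}_n$ to the first register; measure the first register in the computational basis, giving the output in $\{0,1\}^n$. *)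

(* Defs.v *)
From HB Require Import structures.
From mathcomp Require Import all_boot all_order all_algebra.
From mathcomp Require Import algC.
Set Implicit Arguments. Unset Strict Implicit. Unset Printing Implicit Defensive.
Import Order.TTheory GRing.Theory Num.Theory.
Local Open Scope ring_scope.

(* bit strings of length k; bit i is the entry at index i (indexed from the right) *)
Definition B (k : nat) := {ffun 'I_k -> bool}.

Definition bxor k (a b : B k) : B k := [ffun i => a i (+) b i].
Definition bzero k : B k := [ffun => false].
Definition ebit m (i : 'I_m) : B m := [ffun j => j == i].

Definition is_constant n m (f : B n -> B m) : Prop := forall x y, f x = f y.
Definition balanced_with n m (f : B n -> B m) (f1 f2 : B m) : Prop :=
  [/\ f1 != f2, (forall x, f x = f1 \/ f x = f2),
      (2 * #|[set x | f x == f1]| = 2 ^ n)%N & (2 * #|[set x | f x == f2]| = 2 ^ n)%N].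
Definition balanced n m (f : B n -> B m) : Prop := exists f1 f2, balanced_with f f1 f2.

(* register of n+m qubits: basis states |x>_n (x) |z>_m *)
Definition Reg n m := (B n * B m)%type.
Definition op n m := Reg n m -> Reg n m -> algC.  (* matrix entries <s|M|t> *)

Definition apply n m (M : op n m) (psi : Reg n m -> algC) : Reg n m -> algC :=
  fun s => \sum_(t : Reg n m) M s t * psi t.
Definition ket n m (s : Reg n m) : Reg n m -> algC := fun t => (t == s)%:R.

Definition had (a b : bool) : algC := (if a && b then -1 else 1) / sqrtC 2%:R.
Definition Hk k (a b : B k) : algC := \prod_(j < k) had (a j) (b j).

Definition Xop n m (y : B m) : op n m :=
  fun s t => ((s.1 == t.1) && (s.2 == bxor t.2 y))%:R.
Definition Hall n m : op n m := fun s t => Hk s.1 t.1 * Hk s.2 t.2.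
Definition Uf n m (f : B n -> B m) : op n m :=
  fun s t => ((s.1 == t.1) && (s.2 == bxor t.2 (f t.1)))%:R.
Definition Hfirst n m : op n m := fun s t => Hk s.1 t.1 * (s.2 == t.2)%:R.

Definition gpk_state n m (f : B n -> B m) (y : B m) : Reg n m -> algC :=
  apply (@Hfirst n m) (apply (Uf f) (apply (@Hall n m)
    (apply (@Xop n m y) (ket ((bzero n, bzero m) : Reg n m))))).

Definition gpk_prob n m (f : B n -> B m) (y : B m) (d : B n) : algC :=
  \sum_(z : B m) `|gpk_state f y (d, z)| ^+ 2.

Definition lam n m (d : {ffun 'I_m -> B n}) : B m := [ffun i => d i != bzero n].

Definition runs_prob n m (f : B n -> B m) (P : pred {ffun 'I_m -> B n}) : algC :=
  \sum_(d : {ffun 'I_m -> B n} | P d) \prod_(i < m) gpk_prob f (ebit i) (d i).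

(* Main.v *)
Require Import Defs.
From HB Require Import structures.
From mathcomp Require Import all_boot all_order all_algebra.
From mathcomp Require Import algC.
From mathcomp Require Import ring.
Import Order.TTheory GRing.Theory Num.Theory.
Local Open Scope ring_scope.


Notation sq2 := (sqrtC (2%:R : algC)).

Lemma sq2_neq0 : sq2 != 0.
Proof. by rewrite sqrtC_eq0 pnatr_eq0. Qed.

Lemma sq2i2 : sq2^-1 * sq2^-1 = 2^-1 :> algC.
Proof. by rewrite -invfM -expr2 sqrtCK. Qed.

Lemma hadE a b : had a b = (if a && b then -1 else 1) * sq2^-1.
Proof. by []. Qed.

Lemma hadC a b : had a b = had b a.
Proof. by rewrite /had andbC. Qed.

Lemma HkC k (a b : B k) : Hk a b = Hk b a.
Proof. by apply: eq_bigr => j _; rewrite hadC. Qed.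

Lemma had_orth b c : \sum_(a : bool) had a b * had a c = (b == c)%:R.
Proof.
rewrite big_bool !hadE /=.
have h2 : (2^-1 + 2^-1 : algC) = 1.
  by field.
case: b; case: c => /=;
 rewrite ?mulN1r ?mul1r ?mulrNN ?sq2i2 ?h2 ?mulrN ?mulNr ?sq2i2 ?addNr ?addrN //.
Qed.

Lemma Hk_orth k (b c : B k) : \sum_(a : B k) Hk a b * Hk a c = (b == c)%:R.
Proof.
rewrite /Hk.
under eq_bigr do rewrite -big_split /=.
rewrite -(bigA_distr_bigA (fun j (x : bool) => had x (b j) * had x (c j))) /=.
under eq_bigr do rewrite had_orth.
case: (eqVneq b c) => [->|neq].
  by rewrite big1 // => j _; rewrite eqxx.
have [j Hj] : exists j, b j != c j.
  apply/existsP; rewrite -negb_forall; apply: contra neq => /forallP H.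
  by apply/eqP/ffunP => j; apply/eqP/H.
by rewrite (bigD1 j) //= (negbTE Hj) mul0r.
Qed.

Lemma Hk0 k (b : B k) : Hk (bzero k) b = sq2^-1 ^+ k.
Proof.
rewrite /Hk (eq_bigr (fun _ => sq2^-1)) ?prodr_const ?card_ord // => j _.
by rewrite hadE ffunE /= mul1r.
Qed.

Lemma Hke m (v : B m) (i : 'I_m) :
  Hk v (ebit i) = (if v i then -1 else 1) * sq2^-1 ^+ m.
Proof.
rewrite /Hk (eq_bigr (fun j => (if v j && (j == i) then -1 else 1) * sq2^-1));
  last by move=> j _; rewrite hadE ffunE.
rewrite big_split /= prodr_const card_ord (bigD1 i) //= eqxx andbT big1 ?mulr1 //.
by move=> j /negbTE ->; rewrite andbF.
Qed.

Lemma Hk_real k (a b : B k) : Hk a b \is Num.real.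
Proof.
apply: rpred_prod => j _; rewrite hadE; apply: rpredM.
  by case: ifP => _; [apply: rpredN1 | apply: rpred1].
by rewrite realV; apply: sqrtC_real; rewrite ler0n.
Qed.

Set Implicit Arguments. Unset Strict Implicit.


Lemma bxorK k (a w : B k) : bxor (bxor a w) w = a.
Proof. by apply/ffunP => j; rewrite !ffunE -addbA addbb addbF. Qed.

Lemma bxor_inj k (w : B k) : injective (fun a : B k => bxor a w).
Proof. by move=> a b e; rewrite -(bxorK a w) e bxorK. Qed.

Lemma bxor0l k (a : B k) : bxor (bzero k) a = a.
Proof. by apply/ffunP => j; rewrite !ffunE. Qed.

Lemma bxor0r k (a : B k) : bxor a (bzero k) = a.
Proof. by apply/ffunP => j; rewrite !ffunE addbF. Qed.

Lemma sum_delta (T : finType) (s : T) (F : T -> algC) :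
  \sum_t F t * (t == s)%:R = F s.
Proof.
rewrite (bigD1 s) //= eqxx mulr1 big1 ?addr0 // => t /negbTE ->.
by rewrite mulr0.
Qed.

Lemma stateE n m (f : B n -> B m) y d z :
  gpk_state f y (d, z) =
  \sum_(x : B n) Hk d x * (Hk x (bzero n) * Hk (bxor z (f x)) y).
Proof.
have s1 (t : Reg n m) : apply (@Xop n m y) (ket ((bzero n, bzero m) : Reg n m)) t
    = (t == (bzero n, y))%:R.
  rewrite /apply /ket (sum_delta _ (fun u => Xop y t u)) /Xop /= bxor0l.
  by case: t.
have s2 (t : Reg n m) : apply (@Hall n m)
     (apply (@Xop n m y) (ket ((bzero n, bzero m) : Reg n m))) t
    = Hk t.1 (bzero n) * Hk t.2 y.
  rewrite [LHS]/apply (eq_bigr (fun u => Hall t u * (u == (bzero n, y))%:R)).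
    by rewrite sum_delta.
  by move=> u _; congr (_ * _); exact: s1.
have s3 (t : Reg n m) : apply (Uf f) (apply (@Hall n m)
     (apply (@Xop n m y) (ket ((bzero n, bzero m) : Reg n m)))) t
    = Hk t.1 (bzero n) * Hk (bxor t.2 (f t.1)) y.
  rewrite [LHS]/apply (eq_bigr (fun u : Reg n m => (Hk u.1 (bzero n) * Hk u.2 y) *
       (u == (t.1, bxor t.2 (f t.1)))%:R)); first by rewrite sum_delta.
  move=> [a' b'] _; rewrite s2 mulrC; congr (_ * _%:R).
  case: t => a b; rewrite /Uf /= xpair_eqE.
  case: (eqVneq a a') => [<-|ne]; last by [].
  rewrite /=; congr (nat_of_bool _); by apply/idP/idP => /eqP ->; rewrite bxorK eqxx.
rewrite /gpk_state [LHS]/apply.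
rewrite (eq_bigr (fun t : Reg n m => Hfirst (d, z) t *
    (Hk t.1 (bzero n) * Hk (bxor t.2 (f t.1)) y))); last first.
  by move=> t _; rewrite s3.
rewrite -(pair_bigA _ (fun (a : B n) (b : B m) =>
   Hfirst (d, z) (a, b) * (Hk a (bzero n) * Hk (bxor b (f a)) y))) /=.
apply: eq_bigr => x _; rewrite /Hfirst /=.
rewrite (eq_bigr (fun b => (Hk d x * (Hk x (bzero n) * Hk (bxor b (f x)) y)) * (b == z)%:R)).
  by rewrite sum_delta.
by move=> b _; rewrite eq_sym mulrAC.
Qed.



Lemma prob0 n m (f : B n -> B m) y d :
  (forall z, gpk_state f y (d, z) = 0) -> gpk_prob f y d = 0.
Proof. by move=> H; apply: big1 => z _; rewrite H normr0 expr2 mul0r. Qed.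

Lemma L2 n m (f : B n -> B m) (i : 'I_m) b d z :
  (forall x, f x i = b) -> d != bzero n -> gpk_state f (ebit i) (d, z) = 0.
Proof.
move=> Hf nd; rewrite stateE.
rewrite (eq_bigr (fun x => Hk x d * Hk x (bzero n) *
   ((if z i (+) b then -1 else 1) * sq2^-1 ^+ m))).
  by rewrite -mulr_suml Hk_orth (negbTE nd) mul0r.
by move=> x _; rewrite Hke ffunE Hf HkC mulrA.
Qed.

Lemma L3 n m (f : B n -> B m) (i : 'I_m) f1 f2 z :
  balanced_with f f1 f2 -> f1 i != f2 i ->
  gpk_state f (ebit i) (bzero n, z) = 0.
Proof.
move=> [ne Hor c1 c2] nei; rewrite stateE.
rewrite (eq_bigr (fun x => sq2^-1^+n * sq2^-1^+n * sq2^-1^+m *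
   (if z i (+) f x i then -1 else 1))); last first.
  by move=> x _; rewrite Hke Hk0 HkC Hk0 ffunE; ring.
rewrite -mulr_sumr.
suff -> : \sum_(x : B n) (if z i (+) f x i then -1 else 1) = 0 :> algC
  by rewrite mulr0.
have e : #|[set x | f x == f1]| = #|[set x | f x == f2]|.
  by apply/eqP; rewrite -(eqn_pmul2l (_ : 0 < 2)%N) // c1 c2.
rewrite (bigID (fun x => f x == f1)) /=.
rewrite [X in X + _](eq_bigr (fun _ => if z i (+) f1 i then -1 else 1));
  last by move=> x /eqP ->.
rewrite [X in _ + X](eq_bigr (fun _ => if z i (+) f2 i then -1 else 1)); last first.
  by move=> x hx; have [h|->] := Hor x; [by rewrite h eqxx in hx | by []].
rewrite [X in X + _](eq_bigl (fun x => x \in [set x | f x == f1])); last first.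
  by move=> x; rewrite inE.
rewrite [X in _ + X](eq_bigl (fun x => x \in [set x | f x == f2])); last first.
  move=> x; rewrite inE; have [->|->] := Hor x; first by rewrite eqxx (negbTE ne).
  by rewrite eqxx eq_sym ne.
rewrite !sumr_const e -mulrnDl.
move: nei; case: (f1 i); case: (f2 i); case: (z i) => //= _;
  by rewrite ?addrN ?addNr mul0rn.
Qed.

Lemma parseval k (g : B k -> algC) :
  \sum_(d : B k) (\sum_(x : B k) Hk d x * g x) ^+ 2 = \sum_(x : B k) g x ^+ 2.
Proof.
have E x x' : \sum_(d : B k) Hk d x * g x * (Hk d x' * g x')
    = g x * g x' * (x == x')%:R.
  by rewrite -Hk_orth mulr_sumr; apply: eq_bigr => d _; ring.
under eq_bigr do rewrite expr2 big_distrlr /=.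
rewrite exchange_big /=; apply: eq_bigr => x _.
rewrite exchange_big /=; under eq_bigr do rewrite E.
rewrite (bigD1 x) //= big1 ?addr0.
  by rewrite eqxx mulr1 expr2.
by move=> x' nx; rewrite eq_sym (negbTE nx) mulr0.
Qed.

Lemma sumprob n m (f : B n -> B m) y : \sum_(d : B n) gpk_prob f y d = 1.
Proof.
have R d z : gpk_state f y (d, z) \is Num.real.
  by rewrite stateE; apply: rpred_sum => x _; rewrite !rpredM ?Hk_real.
have S k (w b : B k) : \sum_(z : B k) Hk (bxor z w) b ^+ 2 = 1.
  transitivity (\sum_(z : B k) Hk z b ^+ 2).
    by symmetry; rewrite (reindex_inj (@bxor_inj _ w)).
  by under eq_bigr do rewrite expr2; rewrite Hk_orth eqxx.
rewrite /gpk_prob exchange_big /=.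
under eq_bigr => z _ do under eq_bigr => d _ do rewrite (real_normK (R d z)) stateE.
under eq_bigr => z _ do rewrite (parseval (fun x => Hk x (bzero n) * Hk (bxor z (f x)) y)).
rewrite exchange_big /=.
under eq_bigr => x _ do under eq_bigr => z _ do rewrite exprMn.
under eq_bigr => x _ do rewrite -mulr_sumr S mulr1.
by under eq_bigr do rewrite expr2; rewrite Hk_orth eqxx.
Qed.


Lemma runs1 n m (f : B n -> B m) (P : pred {ffun 'I_m -> B n}) :
  (forall d, ~~ P d -> exists i, gpk_prob f (ebit i) (d i) = 0) ->
  runs_prob f P = 1.
Proof.
move=> H; rewrite /runs_prob.
transitivity (\sum_(d : {ffun 'I_m -> B n}) \prod_(i < m) gpk_prob f (ebit i) (d i)).
  rewrite [RHS](bigID P) /= [X in _ = _ + X]big1 ?addr0 // => d nP.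
  by have [i Hi] := H d nP; rewrite (bigD1 i) //= Hi mul0r.
rewrite -(bigA_distr_bigA (fun i a => gpk_prob f (ebit i) a)) /=.
by rewrite big1 // => i _; apply: sumprob.
Qed.

Lemma runs_lam n m (f : B n -> B m) (L : B m) (P : pred {ffun 'I_m -> B n}) :
  (forall d, lam d = L -> P d) ->
  (forall i a, (a != bzero n) != L i -> gpk_prob f (ebit i) a = 0) ->
  runs_prob f P = 1.
Proof.
move=> HP H; apply: runs1 => d nP.
have nL : lam d != L by apply: contra nP => /eqP; apply: HP.
have [i Hi] : exists i, lam d i != L i.
  apply/existsP; rewrite -negb_forall; apply: contra nL => /forallP E.
  by apply/eqP/ffunP => j; apply/eqP/E.
by exists i; apply: H; rewrite ffunE in Hi.
Qed.

Lemma const_ok n m (f : B n -> B m) i a :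
  is_constant f -> (a != bzero n) != bzero m i -> gpk_prob f (ebit i) a = 0.
Proof.
move=> Hc; rewrite ffunE /= => na; apply: prob0 => z.
have na' : a != bzero n by move: na; case: (a != bzero n).
apply: (L2 (b := f (bzero n) i)) na' => x; by rewrite (Hc x (bzero n)).
Qed.

Lemma bal_ok n m (f : B n -> B m) f1 f2 i a :
  balanced_with f f1 f2 -> (a != bzero n) != bxor f1 f2 i ->
  gpk_prob f (ebit i) a = 0.
Proof.
move=> Hb; rewrite ffunE => H; apply: prob0 => z.
case: (eqVneq (f1 i) (f2 i)) => [e|ne].
  move: H; rewrite e addbb /= => na.
  have na' : a != bzero n by move: na; case: (a != bzero n).
  apply: (L2 (b := f2 i)) na' => x.
  by case: Hb => _ Hor _ _; have [->|->] := Hor x.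
have -> : a = bzero n.
  by apply/eqP; move: H; case: (f1 i) ne; case: (f2 i) => //= _; case: (a == bzero n).
exact: (L3 _ Hb ne).
Qed.

Unset Implicit Arguments. Set Strict Implicit.


Theorem corollary3p5 (n m : nat) (f : B n -> B m) :
  is_constant f \/ balanced f ->
  [/\ is_constant f -> runs_prob f (fun d => lam d == bzero m) = 1,
      (forall f1 f2 : B m, balanced_with f f1 f2 ->
         runs_prob f (fun d => lam d == bxor f1 f2) = 1)
    & runs_prob f (fun d =>
         [set f x | x : B n] == [set f (bzero n); bxor (f (bzero n)) (lam d)]) = 1].
Proof.
move=> H; split.
- move=> Hc; apply: (runs_lam (L := bzero m)) => [d ->|i a]; first exact: eqxx.
  exact: const_ok.
- move=> f1 f2 Hb; apply: (runs_lam (L := bxor f1 f2)) => [d ->|i a].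
    exact: eqxx.
  exact: bal_ok.
case: H => [Hc|[f1 [f2 Hb]]].
  apply: (runs_lam (L := bzero m)) => [d ->|i a]; last exact: const_ok.
  apply/eqP/setP => v; rewrite !inE bxor0r orbb.
  apply/imsetP/eqP => [[x _ ->]|->]; [exact: Hc | by exists (bzero n)].
apply: (runs_lam (L := bxor f1 f2)) => [d ->|i a]; last exact: bal_ok.
have [ne Hor c1 c2] := Hb.
have x1 : bxor f1 (bxor f1 f2) = f2.
  by apply/ffunP => j; rewrite !ffunE addbA addbb.
have x2 : bxor f2 (bxor f1 f2) = f1.
  by apply/ffunP => j; rewrite !ffunE addbC -addbA addbb addbF.
have ex (g : B m) : (2 * #|[set x | f x == g]| = 2 ^ n)%N -> exists x, f x = g.
  move=> c; have : (0 < #|[set x | f x == g]|)%N.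
    by rewrite lt0n; apply/eqP => e; move: c; rewrite e muln0 => /eqP; rewrite eq_sym expn_eq0.
  by rewrite card_gt0 => /set0Pn [x]; rewrite inE => /eqP; exists x.
have [y1 e1] := ex _ c1; have [y2 e2] := ex _ c2.
have -> : [set f x | x : B n] = [set f1; f2].
  apply/setP => v; rewrite !inE; apply/imsetP/orP => [[x _ ->]|[/eqP->|/eqP->]].
  - by have [->|->] := Hor x; [left|right].
  - by exists y1.
  - by exists y2.
apply/eqP/setP => v; rewrite !inE.
have [->|->] := Hor (bzero n); first by rewrite x1.
by rewrite x2 orbC.
Qed.
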